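(* Let $\Gamma$ be a Neumaier graph with parameters $(n,k,\lambda;a,c)$. If $c=k$, then $\Gamma$ is the cycle graph $C_4$.
   Context: All graphs are finite, simple, undirected and connected. A graph is edge-regular with parameters $(n,k,\lambda)$ if it has $n$ vertices, is $k$-regular, and any two adjacent vertices have exactly $\lambda$ common neighbours. A clique $C$ is a regular clique with nexus $a$ if every vertex not in $C$ has exactly $a$ neighbours in $C$. A Neumaier graph is a non-complete edge-regular graph containing a regular clique; it has parameters $(n,k,\lambda;a,c)$ if it is edge-regular with parameters $(n,k,\lambda)$ and contains a regular clique of size $c$ with nexus $a$. *)

(* Defs.v *)
From mathcomp Require Import all_boot.
Set Implicit Arguments.
Unset Strict Implicit.
Unset Printing Implicit Defensive.

Section Graphs.
Variable T : finType.
Variable e : rel T.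

Definition simple_graph : Prop := symmetric e /\ irreflexive e.

Definition connected_graph : Prop := forall x y : T, connect e x y.

Definition complete_graph : Prop := forall x y : T, x != y -> e x y.

Definition edge_regular (n k lam : nat) : Prop :=
  [/\ #|T| = n,
      forall x : T, #|[set y | e x y]| = k &
      forall x y : T, e x y -> #|[set z | e x z && e y z]| = lam].

Definition is_clique (C : {set T}) : Prop :=
  forall x y, x \in C -> y \in C -> x != y -> e x y.

Definition regular_clique (C : {set T}) (a : nat) : Prop :=
  is_clique C /\ forall x, x \notin C -> #|[set y in C | e x y]| = a.

Definition neumaier_params (n k lam a c : nat) : Prop :=
  [/\ ~ complete_graph, edge_regular n k lam &
      exists C : {set T}, #|C| = c /\ regular_clique C a].
End Graphs.

Definition C4_rel : rel 'I_4 :=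
  fun i j => (j == (i.+1 %% 4) :> nat) || (i == (j.+1 %% 4) :> nat).

Definition isomorphic_to_C4 (T : finType) (e : rel T) : Prop :=
  exists f : T -> 'I_4, bijective f /\ forall x y, e x y = C4_rel (f x) (f y).

(* Main.v *)
Require Import Defs.
From mathcomp Require Import all_boot.
From mathcomp Require Import zify.

Theorem proposition3p10 (T : finType) (e : rel T) (n k lam a c : nat) :
  simple_graph e -> connected_graph e ->
  neumaier_params e n k lam a c ->
  c = k ->
  isomorphic_to_C4 e.
Proof.
move=> [esym eirr] conn [ncomp [cardT degk lamP] [C [cardC [cliq nexus]]]] ck.
rewrite ck in cardC; clear ck.
have kpos : 0 < k.
  case: k degk cardC lamP => [|k'] degk cardC lamP //.
  exfalso; apply: ncomp => x y nxy.
  have /connectP [[|z p] pth lst] := conn x y.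
    by rewrite lst eqxx in nxy.
  move: pth => /= /andP [exz _].
  have := card0_eq (degk x) z; by rewrite inE exz.
have outn : forall x, x \in C -> exists y, [set y | e x y] :\: C = [set y].
  move=> x xC; apply/cards1P.
  have H : [set y | e x y] :&: C = C :\ x.
    apply/setP => z; rewrite !inE.
    case: (eqVneq z x) => [->|zx]; first by rewrite eirr.
    case zC: (z \in C); rewrite ?andbF ?andbT //=.
    by apply: cliq => //; rewrite eq_sym.
  have := cardsID C [set y | e x y]; rewrite H degk.
  have := cardsD1 x C; rewrite xC cardC. lia.
have [x1 x1C] : exists x, x \in C by apply/card_gt0P; rewrite cardC.
have [y1 Hy1] := outn x1 x1C.
have y1in : y1 \in [set y | e x1 y] :\: C by rewrite Hy1 set11.
move: y1in; rewrite !inE => /andP [y1C ex1y1].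
have uniq1 : forall z, e x1 z -> z \notin C -> z = y1.
  move=> z exz zC; apply/set1P; rewrite -Hy1 !inE zC exz //.
set A := [set y in C | e y1 y].
have cardA : #|A| = a by apply: nexus.
have x1A : x1 \in A by rewrite inE x1C esym.
have lamA : lam.+1 = a.
  rewrite -(lamP x1 y1 ex1y1) -cardA (cardsD1 x1 A) x1A add1n; congr (_.+1); apply: eq_card => z.
  rewrite !inE.
  case: (eqVneq z x1) => [->|zx]; first by rewrite eirr.
  case zC: (z \in C) => /=.
    by rewrite (cliq x1 z) // eq_sym.
  apply/negP => /andP [exz ey].
  by rewrite (uniq1 z exz (negbT zC)) eirr in ey.
have Ax1 : forall x', x' \in A -> x' = x1.
  move=> x' x'A; apply/eqP; apply/negPn/negP => nx.
  move: (x'A); rewrite inE => /andP [x'C ey1x'].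
  have ex1x' : e x1 x' by apply: cliq => //; rewrite eq_sym.
  have sub : y1 |: (C :\ x1 :\ x') \subset [set z | e x1 z & e x' z].
    apply/subsetP => z; rewrite !inE => /orP [/eqP ->|/and3P [zx' zx1 zC]].
      by rewrite ex1y1 esym.
    by rewrite (cliq x1 z) ?(cliq x' z) // eq_sym.
  move: (subset_leq_card sub); rewrite (lamP x1 x' ex1x').
  rewrite cardsU1 !inE (negbTE y1C) !andbF /=.
  have := cardsD1 x1 C; have := cardsD1 x' (C :\ x1).
  rewrite x1C !inE x'C nx cardC /= => h1 h2 h3.
  have AC : A = C.
    apply/eqP; rewrite eqEcard cardA cardC.
    apply/andP; split; last by lia.
    by apply/subsetP => z; rewrite inE => /andP [].
  have every : forall z, z \notin C -> z = y1.
    move=> z zC; apply: uniq1 => //.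
    have : [set y in C | e z y] = C.
      apply/eqP; rewrite eqEcard nexus // cardC.
      apply/andP; split; last by lia.
      by apply/subsetP => w; rewrite inE => /andP [].
    move/setP => /(_ x1); rewrite !inE x1C /= => ezx1.
    by rewrite esym.
  apply: ncomp => x y nxy.
  case xC: (x \in C); case yC: (y \in C).
  - by apply: cliq.
  - rewrite (every y (negbT yC)) esym.
    by move: xC; rewrite -AC inE => /andP [].
  - rewrite (every x (negbT xC)).
    by move: yC; rewrite -AC inE => /andP [].
  - by rewrite (every x (negbT xC)) (every y (negbT yC)) eqxx in nxy.
have a1 : a = 1.
  rewrite -cardA; apply/eqP/cards1P; exists x1; apply/setP => z.
  by rewrite inE; apply/idP/eqP => [/Ax1|->].
have lam0 : lam = 0 by lia.
have nbC : forall z, z \notin C -> exists2 w, w \in C & e z w.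
  move=> z zC; have /card_gt0P [w] : 0 < #|[set y in C | e z y]| by rewrite nexus // a1.
  by rewrite inE => /andP [wC ezw]; exists w.
have [x2 x2C1] : exists x2, x2 \in C :\ x1.
  have [c0|cpos] := posnP #|C :\ x1|; last by apply/card_gt0P.
  exfalso.
  have inC1 : forall w, w \in C -> w = x1.
    move=> w wC; apply/eqP; apply/negPn/negP => wx.
    by have := card0_eq c0 w; rewrite !inE wx wC.
  have every : forall z, z = x1 \/ z = y1.
    move=> z; case zC: (z \in C); first by left; apply: inC1.
    right; have [w wC ezw] := nbC z (negbT zC).
    by apply: uniq1 (negbT zC); rewrite -(inC1 w wC) esym.
  apply: ncomp => x y.
  case: (every x) => ->; case: (every y) => ->; rewrite ?eqxx // => _;
    by rewrite ?ex1y1 // esym.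
move: x2C1; rewrite !inE => /andP [x2x1 x2C].
have ex1x2 : e x1 x2 by apply: cliq => //; rewrite eq_sym.
have inC2 : forall w, w \in C -> w = x1 \/ w = x2.
  move=> w wC; case: (eqVneq w x1) => [->|wx1]; first by left.
  case: (eqVneq w x2) => [->|wx2]; first by right.
  exfalso; have l0 := lamP x1 x2 ex1x2; rewrite lam0 in l0.
  have := card0_eq l0 w; rewrite !inE.
  by rewrite (cliq x1 w) ?(cliq x2 w) // eq_sym.
have [y2 Hy2] := outn x2 x2C.
have y2in : y2 \in [set y | e x2 y] :\: C by rewrite Hy2 set11.
move: y2in; rewrite !inE => /andP [y2C ex2y2].
have uniq2 : forall z, e x2 z -> z \notin C -> z = y2.
  move=> z exz zC; apply/set1P; rewrite -Hy2 !inE zC exz //.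
have nex2y1 : e x2 y1 = false.
  apply/negP => h; have : x2 \in A by rewrite inE x2C esym.
  by move/Ax1 => ee; rewrite ee eqxx in x2x1.
have nex1y2 : e x1 y2 = false.
  apply/negP => h; have ee := uniq1 y2 h y2C.
  by rewrite -ee ex2y2 in nex2y1.
have y1y2 : y1 != y2 by apply/eqP => ee; rewrite ee ex2y2 in nex2y1.
have every : forall z, [\/ z = x1, z = x2, z = y2 | z = y1].
  move=> z; case zC: (z \in C).
    by case: (inC2 z zC) => ->; [apply: Or41 | apply: Or42].
  have [w wC ezw] := nbC z (negbT zC).
  case: (inC2 w wC) => ee; subst w.
    by apply: Or44; apply: uniq1 (negbT zC); rewrite esym.
  by apply: Or43; apply: uniq2 (negbT zC); rewrite esym.
have k2 : 1 < k.
  have := cardsD1 x1 C; have := cardsD1 x2 (C :\ x1).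
  rewrite x1C !inE x2C x2x1 cardC /=; lia.
have ey1y2 : e y1 y2.
  apply/negPn/negP => ne.
  have : [set y | e y1 y] \subset [set x1].
    apply/subsetP => z; rewrite !inE.
    case: (every z) => ->; rewrite ?eqxx // ?eirr //.
      by rewrite esym nex2y1.
    by rewrite (negbTE ne).
  move/subset_leq_card; rewrite degk cards1; lia.
have ex2x1 : e x2 x1 by rewrite esym.
have ey1x1 : e y1 x1 by rewrite esym.
have ey2x2 : e y2 x2 by rewrite esym.
have ey2y1 : e y2 y1 by rewrite esym.
have ney1x2 : e y1 x2 = false by rewrite esym.
have ney2x1 : e y2 x1 = false by rewrite esym.
have d1 : (y1 == x1) = false by apply/negbTE; apply: contraNneq y1C => ->.
have d2 : (y2 == x1) = false by apply/negbTE; apply: contraNneq y2C => ->.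
have d3 : (y1 == x2) = false by apply/negbTE; apply: contraNneq y1C => ->.
have d4 : (y2 == x2) = false by apply/negbTE; apply: contraNneq y2C => ->.
have d5 : (x2 == x1) = false by apply/negbTE.
have d6 : (y1 == y2) = false by apply/negbTE.
pose f (z : T) : 'I_4 := if z == x1 then @Ordinal 4 0 isT else if z == x2 then @Ordinal 4 1 isT
  else if z == y2 then @Ordinal 4 2 isT else @Ordinal 4 3 isT.
pose g (i : 'I_4) : T := match nat_of_ord i with 0 => x1 | 1 => x2 | 2 => y2 | _ => y1 end.
exists f; split.
  exists g.
    move=> z; case: (every z) => ->; by rewrite /f /g ?eqxx ?d1 ?d2 ?d3 ?d4 ?d5 ?d6.
  case=> [[|[|[|[|m]]]] lt] //; apply: val_inj;
    by rewrite /f /g /= ?eqxx ?d1 ?d2 ?d3 ?d4 ?d5 ?d6.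
move=> x y.
case: (every x) => ->; case: (every y) => ->;
  rewrite /f ?eqxx ?d1 ?d2 ?d3 ?d4 ?d5 ?d6 ?eirr ?ex1x2 ?ex2x1 ?ex1y1 ?ey1x1
    ?ex2y2 ?ey2x2 ?ey1y2 ?ey2y1 ?ney1x2 ?ney2x1 ?nex1y2 ?nex2y1 //.
Qed.
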